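(* Let $m$ be a positive integer, $n=m(m+1)/2$, write $\prod_{i=1}^m(1-X^i)=\sum_{i=0}^nc_iX^i$, and set $d_j=\sum_{i=0}^{n-j}c_i$ for $j=1,\dots,n$. Then for every non-empty $S\subseteq[1,m]$, $$\sum_{j=1}^n d_j\,r(j,S)=\sum_{j=1}^n d_j\,p(j,S)=\begin{cases}1&\text{if }S=[1,m],\\0&\text{otherwise.}\end{cases}$$
   Context: $p(k,S)$ is the number of partitions of $k$ all of whose parts lie in $S$. $r(k,S)$ is the number of partitions of $k$ whose set of distinct parts is exactly $S$. $[1,m]=\{1,\dots,m\}$. *)

(* Defs.v *)
From HB Require Import structures.
From mathcomp Require Import all_boot all_order all_algebra.
Set Implicit Arguments. Unset Strict Implicit. Unset Printing Implicit Defensive.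
Import Order.TTheory GRing.Theory Num.Theory.

(* A partition of k is encoded by its multiplicity function:
   f i = number of parts equal to i (1 <= i <= k); f 0 = 0 (parts are
   positive), and \sum_i i * f i = k.  Every multiplicity is <= k, so
   f : {ffun 'I_k.+1 -> 'I_k.+1} covers all partitions of k bijectively. *)
Definition is_partition_mult (k : nat) (f : {ffun 'I_k.+1 -> 'I_k.+1}) : bool :=
  (nat_of_ord (f ord0) == 0%N) && ((\sum_(i < k.+1) i * f i)%N == k).

Definition is_part (k : nat) (f : {ffun 'I_k.+1 -> 'I_k.+1}) (i : 'I_k.+1) : bool :=
  nat_of_ord (f i) != 0%N.

Definition p_count (k : nat) (S : seq nat) : nat :=
  #|[set f : {ffun 'I_k.+1 -> 'I_k.+1} | is_partition_mult f &
      [forall i : 'I_k.+1, is_part f i ==> (nat_of_ord i \in S)]]|.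

Definition r_count (k : nat) (S : seq nat) : nat :=
  #|[set f : {ffun 'I_k.+1 -> 'I_k.+1} | is_partition_mult f &
      [forall i : 'I_k.+1, is_part f i ==> (nat_of_ord i \in S)] &&
      all (fun s => (s < k.+1)%N && is_part f (inord s)) S]|.

Local Open Scope ring_scope.

Definition Pm (m : nat) : {poly int} := \prod_(1 <= i < m.+1) (1 - 'X^i).

Definition cc (m i : nat) : int := (Pm m)`_i.

Definition nn (m : nat) : nat := (m * m.+1) %/ 2.

Definition dd (m j : nat) : int := \sum_(0 <= i < (nn m - j).+1) cc m i.

(* Main.v *)
Require Import Defs.
From HB Require Import structures.
From mathcomp Require Import all_boot all_order all_algebra.
Set Implicit Arguments. Unset Strict Implicit. Unset Printing Implicit Defensive.
Import Order.TTheory GRing.Theory Num.Theory.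
Local Open Scope ring_scope.

Definition teq (k : nat) (p q : {poly int}) := forall i, (i <= k)%N -> p`_i = q`_i.

Lemma teqM k p p' q q' : teq k p p' -> teq k q q' -> teq k (p * q) (p' * q').
Proof.
move=> hp hq i hi; rewrite !coefM; apply: eq_bigr => j _.
rewrite hp ?hq //; first exact: leq_trans (leq_subr _ _) hi.
by apply: leq_trans hi; rewrite -ltnS.
Qed.

Lemma teq_refl k p : teq k p p. Proof. by []. Qed.
Lemma teq_sym k p q : teq k p q -> teq k q p. Proof. by move=> h i hi; rewrite h. Qed.
Lemma teq_trans k p q r : teq k p q -> teq k q r -> teq k p r.
Proof. by move=> h1 h2 i hi; rewrite h1 ?h2. Qed.

Lemma teq_prod k I (r : seq I) (P : pred I) (F G : I -> {poly int}) :
  (forall i, P i -> teq k (F i) (G i)) ->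
  teq k (\prod_(i <- r | P i) F i) (\prod_(i <- r | P i) G i).
Proof.
move=> h; apply: (big_ind2 (teq k)) => //; exact: teqM.
Qed.

From Stdlib Require Import Lia.
Lemma natpred_aux x y a b : (x <= a.+1)%N -> (y <= b.+1)%N -> ((x + y).-1 <= (a + b).+1)%N.
Proof. move=> /ssrnat.leP h1 /ssrnat.leP h2; apply/ssrnat.leP; rewrite -subn1 -!plusE -minusE; lia. Qed.

Lemma size_prod_le (r : seq nat) (F : nat -> {poly int}) :
  (forall i, size (F i) <= i.+1)%N ->
  (size (\prod_(i <- r) F i)%R <= (\sum_(i <- r) i).+1)%N.
Proof.
move=> h; elim: r => [|a r IH]; first by rewrite !big_nil size_poly1.
rewrite !big_cons; apply: leq_trans (size_polyMleq _ _) _.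
exact: natpred_aux.
Qed.

Definition T (w : nat -> nat -> bool) (N i : nat) : {poly int} :=
  \sum_(j < N) (if w i j then 'X^(i*j) else 0).

Lemma coefT w N i t : (0 < i)%N -> (t < N)%N ->
  (T w N i)`_t = \sum_(j < t.+1) ((w i j) && (t == i * j)%N)%:R.
Proof.
move=> i0 tN; rewrite /T coef_sum.
rewrite (big_ord_widen N (fun j => ((w i j) && (t == i * j)%N)%:R : int) tN).
rewrite [RHS]big_mkcond /=; apply: eq_bigr => j _.
case: (w i j); last by rewrite coef0 /=; case: ifP.
rewrite coefXn /=; case: ltnP => // jt.
rewrite (_ : (t == i*j)%N = false) //; apply/negbTE.
by rewrite neq_ltn (leq_trans jt) ?leq_pmull.
Qed.

Lemma T_one w N i : (0 < N)%N -> (forall j, w i j = (j == 0)%N) -> T w N i = 1.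
Proof.
move=> N0 h; rewrite /T; case: N N0 => // N _.
rewrite big_ord_recl h /= muln0 expr0 big1 ?addr0 // => j _.
by rewrite h.
Qed.

Lemma teq_T w N N' i k : (forall j, w 0%N j = (j == 0)%N) -> (k < N)%N -> (k < N')%N ->
  teq k (T w N i) (T w N' i).
Proof.
move=> w0 kN kN' t tk; case: (posnP i) => [->|i0].
  by rewrite !T_one //; [exact: leq_ltn_trans kN' | exact: leq_ltn_trans kN].
by rewrite !coefT // (leq_ltn_trans tk).
Qed.

Lemma teq_T_big w N i k : (0 < i)%N -> (k < i)%N -> (k < N)%N ->
  teq k (T w N i) (if w i 0%N then 1 else 0).
Proof.
move=> i0 ki kN t tk; rewrite coefT //; last exact: leq_ltn_trans tk kN.
rewrite big_ord_recl big1 ?addr0.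
  by rewrite muln0; case: (w i 0%N); rewrite ?coef1 ?coef0 //=; case: (t == 0)%N.
move=> j _; rewrite /=; case: eqP; rewrite ?andbF // => ht; exfalso.
have : (i <= t)%N by rewrite ht leq_pmulr.
by rewrite leqNgt (leq_ltn_trans tk ki).
Qed.

Lemma teq_prod_seq k (r : seq nat) (F G : nat -> {poly int}) :
  (forall i, i \in r -> teq k (F i) (G i)) ->
  teq k (\prod_(i <- r) F i) (\prod_(i <- r) G i).
Proof.
move=> h; rewrite big_seq [X in teq _ _ X]big_seq; apply: teq_prod => i; exact: h.
Qed.

Lemma chain w k K m : (k <= K)%N -> (forall j, w 0%N j = (j == 0)%N) ->
  (forall i j, (m < i)%N -> w i j = (j == 0)%N) -> (forall i, (k < i)%N -> w i 0%N) ->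
  teq k (\prod_(i < k.+1) T w k.+1 i) (\prod_(1 <= i < m.+1) T w K.+1 i).
Proof.
move=> kK w0 wm wk.
apply: (@teq_trans _ _ (\prod_(i < k.+1) T w K.+1 i)).
  by apply: teq_prod => i _; apply: teq_T.
rewrite -(big_mkord xpredT (T w K.+1)).
apply: (@teq_trans _ _ (\prod_(0 <= i < k.+1 + m) T w K.+1 i)).
  rewrite [X in teq _ _ X](big_cat_nat (n:=k.+1)) ?leq_addr //=.
  rewrite -[X in teq _ X _]mulr1.
  apply: teqM => //.
  apply: (@teq_trans _ _ (\prod_(k.+1 <= i < k.+1 + m) (1 : {poly int}))); first by rewrite big1.
  apply: teq_prod_seq => i; rewrite mem_index_iota => /andP [ki _].
  have := teq_T_big w (leq_ltn_trans (leq0n k) ki) ki (kK : (k < K.+1)%N).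
  rewrite wk // => h; exact: teq_sym.
rewrite (big_cat_nat (n:=1)) //= big_nat1 T_one // mul1r.
rewrite (big_cat_nat (n:=m.+1)) //=; last by rewrite addSn ltnS leq_addl.
rewrite [X in _ * X]big1_seq ?mulr1 // => i /andP [_]; rewrite mem_index_iota => /andP [mi _].
by apply: T_one => // j; apply: wm.
Qed.

Lemma chain0 w k K m s : (k <= K)%N -> (0 < s)%N -> (k < s)%N -> (s <= m)%N -> w s 0%N = false ->
  teq k (\prod_(1 <= i < m.+1) T w K.+1 i) 0.
Proof.
move=> kK s0 ks sm ws.
rewrite (bigD1_seq s) /=; last exact: iota_uniq.
  rewrite -(mul0r (\prod_(i <- index_iota 1 m.+1 | i != s) T w K.+1 i)).
  apply: teqM => //; have := teq_T_big w s0 ks (kK : (k < K.+1)%N); by rewrite ws.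
by rewrite mem_index_iota s0 ltnS.
Qed.

Lemma prod_ifX (I : finType) (b : pred I) (e : I -> nat) :
  \prod_(i : I) (if b i then 'X^(e i) else 0 : {poly int}) =
  if [forall i, b i] then 'X^(\sum_i e i) else 0.
Proof.
case: forallP => [hb|/forallP/forallPn [i0 hi0]].
  rewrite -prodrXr; apply: eq_bigr => i _; by rewrite hb.
rewrite (bigD1 i0) //= (negbTE hi0) mul0r //.
Qed.

Lemma count_coef (k : nat) (c : nat -> nat -> bool) :
  (#|[set f : {ffun 'I_k.+1 -> 'I_k.+1} | [forall i : 'I_k.+1, c (nat_of_ord i) (nat_of_ord (f i))] && ((\sum_(i < k.+1) i * f i)%N == k)]|)%:Z =
  (\prod_(i < k.+1) \sum_(j < k.+1) (if c i j then 'X^(i*j) else 0) : {poly int})`_k.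
Proof.
rewrite bigA_distr_bigA coef_sum -sum1_card -natz natr_sum big_mkcond /=.
apply: eq_bigr => f _.
rewrite (prod_ifX (fun i : 'I_k.+1 => c i (f i)) (fun i : 'I_k.+1 => (i * f i)%N)) inE.
case: forallP => _ /=; last by rewrite coef0.
by rewrite coefXn eq_sym; case: eqP.
Qed.

Definition condP (S : seq nat) (i j : nat) : bool := (j == 0)%N || ((i != 0)%N && (i \in S)).
Definition condR (S : seq nat) (i j : nat) : bool :=
  if (i != 0)%N && (i \in S) then (j != 0)%N else (j == 0)%N.

Lemma p_count_coef k S : (p_count k S)%:Z =
  (\prod_(i < k.+1) \sum_(j < k.+1) (if condP S i j then 'X^(i*j) else 0) : {poly int})`_k.
Proof.
rewrite -count_coef /p_count; congr (_%:Z); apply: eq_card => f; rewrite !inE /is_partition_mult.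
apply/idP/idP.
  case/andP => /andP [/eqP f0 ->] /forallP h; rewrite andbT; apply/forallP => i.
  rewrite /condP; case: (eqVneq (nat_of_ord (f i)) 0%N) => //= fi.
  have := h i; rewrite /is_part fi /= => ->; rewrite andbT.
  by apply: contra_neq fi => i0; rewrite (_ : i = ord0) ?f0 //; apply: val_inj.
case/andP => /forallP h ->; rewrite andbT; apply/andP; split.
  by have := h ord0; rewrite /condP /= orbF.
apply/forallP => i; apply/implyP; rewrite /is_part => fi.
by have := h i; rewrite /condP (negbTE fi) /= => /andP [].
Qed.

Lemma r_count_coef k S : all (fun s => 0 < s)%N S -> all (fun s => s < k.+1)%N S ->
  (r_count k S)%:Z =
  (\prod_(i < k.+1) \sum_(j < k.+1) (if condR S i j then 'X^(i*j) else 0) : {poly int})`_k.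
Proof.
move=> /allP S0 /allP Sk.
rewrite -count_coef /r_count; congr (_%:Z); apply: eq_card => f; rewrite !inE /is_partition_mult.
apply/idP/idP.
  case/andP => /andP [/eqP f0 ->] /andP [/forallP h /allP hS]; rewrite andbT; apply/forallP => i.
  rewrite /condR; case: (eqVneq (nat_of_ord i) 0%N) => [i0|inz] /=.
    by rewrite (_ : i = ord0) ?f0 //; apply: val_inj.
  case: ifP => iS.
    have /andP [_] := hS _ iS; rewrite /is_part.
    by rewrite (_ : inord i = i) //; apply: val_inj; rewrite /= inordK.
  by have := h i; rewrite /is_part iS implybF => /negPn.
case/andP => /forallP h ->; rewrite andbT; apply/andP; split.
  by have := h ord0; rewrite /condR /=.
apply/andP; split.
  apply/forallP => i; apply/implyP; rewrite /is_part => fi.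
  have := h i; rewrite /condR; by case: ifP => [/andP [] //| _ /eqP fi0]; rewrite fi0 in fi.
apply/allP => s sS; rewrite Sk //=.
have := h (inord s); rewrite /condR inordK ?Sk // sS andbT.
by rewrite -lt0n S0.
Qed.

Lemma telesc1 i N : (1 - 'X^i) * \sum_(j < N) 'X^(i*j) = 1 - 'X^(i*N) :> {poly int}.
Proof.
elim: N => [|N IH]; first by rewrite big_ord0 mulr0 muln0 expr0 subrr.
rewrite big_ord_recr /= mulrDr IH mulrBl mul1r -exprD mulnS addnC.
by rewrite addrA subrK.
Qed.

Lemma telesc2 i N : (1 - 'X^i) * \sum_(j < N.+1) (if nat_of_ord j == 0%N then 0 else 'X^(i*j)) =
   'X^i - 'X^(i*N.+1) :> {poly int}.
Proof.
elim: N => [|N IH]; first by rewrite big_ord1 /= mulr0 muln1 subrr.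
rewrite big_ord_recr /= mulrDr IH mulrBl mul1r -exprD mulnS addnC.
rewrite addrA subrK; congr (_ - 'X^_); rewrite !mulnS. by rewrite (addnC (i * N)).
Qed.

Lemma teq_1X n e : (n < e)%N -> teq n (1 - 'X^e) 1.
Proof.
move=> ne t tn; rewrite coefB coefXn.
rewrite (_ : (t == e) = false) ?subr0 //; apply/negbTE.
by rewrite neq_ltn (leq_ltn_trans tn ne).
Qed.

Lemma teq_X1X n i e : (n < e)%N -> teq n ('X^i - 'X^e) 'X^i.
Proof.
move=> ne t tn; rewrite coefB (coefXn _ e).
rewrite (_ : (t == e) = false) ?subr0 //; apply/negbTE.
by rewrite neq_ltn (leq_ltn_trans tn ne).
Qed.

Lemma sum_swap (a b : nat -> int) n :
  \sum_(j < n.+1) a j * \sum_(i < (n - j).+1) b i =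
  \sum_(N < n.+1) \sum_(j < N.+1) a j * b (N - j)%N.
Proof.
elim: n => [|n IH]; first by rewrite !big_ord1 /= subnn.
rewrite [RHS]big_ord_recr /= -IH [LHS]big_ord_recr /= subnn.
rewrite [X in _ = _ + X]big_ord_recr /= subnn addrA; congr (_ + _).
  rewrite -big_split /=; apply: eq_bigr => j _.
  have jn : (j <= n)%N by rewrite -ltnS.
  by rewrite subSn // big_ord_recr /= mulrDr.
by rewrite big_ord1.
Qed.

Lemma sum_coef_horner1 (p : {poly int}) N : (size p <= N.+1)%N ->
  \sum_(i < N.+1) p`_i = p.[1].
Proof.
move=> sp; rewrite horner_coef.
under [RHS]eq_bigr do rewrite expr1n mulr1.
rewrite -(big_mkord xpredT (fun i => p`_i)) -(big_mkord xpredT (fun i => p`_i)).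
rewrite (big_cat_nat (n := size p)) //= [X in _ + X]big1_seq ?addr0 //.
move=> i /andP [_]; rewrite mem_index_iota => /andP [h _].
exact: nth_default.
Qed.

Lemma tri_sum m : (\sum_(1 <= i < m.+1) i)%N = nn m.
Proof.
have := bin2_sum m.+1; rewrite (big_ltn (ltn0Sn m)) add0n => ->.
by rewrite /nn bin2 /= divn2 mulnC.
Qed.

Lemma size_1X i : (size ((1 - 'X^i)%R : {poly int}) <= i.+1)%N.
Proof.
apply: leq_trans (size_polyD _ _) _; rewrite size_polyN size_polyXn size_poly1.
by rewrite geq_max ltnS leqnn andbT.
Qed.

Lemma size_Pm m : (size (Pm m) <= (nn m).+1)%N.
Proof. rewrite -tri_sum; apply: size_prod_le => i; exact: size_1X. Qed.

Lemma key m (G : {poly int}) (h : nat -> {poly int}) (f : nat -> int) :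
  (0 < m)%N ->
  teq (nn m) (G * Pm m) (\prod_(1 <= i < m.+1) h i) ->
  (forall i, size (h i) <= i.+1)%N ->
  (forall j, (j <= nn m)%N -> f j = G`_j) ->
  \sum_(1 <= j < (nn m).+1) dd m j * f j = (\prod_(1 <= i < m.+1) h i).[1].
Proof.
move=> m0 hT hs hf.
have Pm1 : (Pm m).[1] = 0.
  rewrite /Pm (big_ltn (_ : 1 < m.+1)%N) ?ltnS // hornerM !hornerE /=.
  by [].
have dd0 : dd m 0 = 0.
  by rewrite /dd subn0 big_mkord -[RHS]Pm1 -(sum_coef_horner1 (N := nn m)) ?size_Pm.
transitivity (\sum_(0 <= j < (nn m).+1) dd m j * G`_j).
  rewrite [RHS](big_ltn (ltn0Sn _)) dd0 mul0r add0r.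
  apply: eq_big_nat => j /andP [_ jn]; rewrite hf //.
rewrite big_mkord.
transitivity (\sum_(j < (nn m).+1) G`_j * \sum_(i < (nn m - j).+1) (Pm m)`_i).
  by apply: eq_bigr => j _; rewrite mulrC /dd big_mkord.
rewrite (sum_swap (fun j => G`_j)) -(sum_coef_horner1 (N := nn m)); last first.
  rewrite -tri_sum; exact: size_prod_le.
by apply: eq_bigr => N _; rewrite -coefM; apply: hT; rewrite -ltnS; exact: ltn_ord.
Qed.

Unset Implicit Arguments.
Set Strict Implicit.

Theorem propositionA (m : nat) (S : seq nat) :
  (0 < m)%N ->
  S != [::] ->
  all (fun s => (1 <= s <= m)%N) S ->
  let n := nn m in
  (\sum_(1 <= j < n.+1) dd m j * (r_count j S)%:Z =
   \sum_(1 <= j < n.+1) dd m j * (p_count j S)%:Z)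
  /\ (S =i iota 1 m -> \sum_(1 <= j < n.+1) dd m j * (p_count j S)%:Z = 1)
  /\ (~ (S =i iota 1 m) -> \sum_(1 <= j < n.+1) dd m j * (p_count j S)%:Z = 0).
Proof.
move=> m0 Sne /allP Sr /=; set n := nn m.
have notS : forall i, ((i == 0) || (m < i))%N -> i \notin S.
  move=> i hi; apply/negP => /Sr /andP [i1 im].
  by case/orP: hi => [/eqP i0|]; [rewrite i0 in i1 | rewrite ltnNge im].
have Spos : all (fun s => 0 < s)%N S by apply/allP => s /Sr /andP [].
set GP := \prod_(1 <= i < m.+1) T (condP S) n.+1 i.
set GR := \prod_(1 <= i < m.+1) T (condR S) n.+1 i.
have hp : forall j, (j <= n)%N -> (p_count j S)%:Z = GP`_j.
  move=> j jn; rewrite p_count_coef.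
  apply: (chain (w := condP S) jn).
  - by move=> j0; rewrite /condP /= orbF.
  - move=> i j0 mi; rewrite /condP (negbTE (notS i _)) ?andbF ?orbF //.
    by rewrite mi orbT.
  - by move=> i _; rewrite /condP.
  - by [].
have hr : forall j, (j <= n)%N -> (r_count j S)%:Z = GR`_j.
  move=> j jn; case: (boolP (all (fun s => s < j.+1)%N S)) => hall.
    rewrite r_count_coef //.
    apply: (chain (w := condR S) jn).
    - by move=> j0; rewrite /condR.
    - move=> i j0 mi; rewrite /condR (negbTE (notS i _)) ?andbF //.
      by rewrite mi orbT.
    - move=> i ji; rewrite /condR; case: ifP => // /andP [_ iS].
      by move/allP: hall => /(_ _ iS); rewrite ltnS leqNgt ji.
    - by [].
  case/allPn: hall => s sS; rewrite ltnS -ltnNge => js.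
  have /andP [s1 sm] := Sr _ sS.
  rewrite (chain0 (w := condR S) jn s1 js sm) ?coef0 //; last first.
    by rewrite /condR sS -lt0n s1.
  rewrite (_ : r_count j S = 0%N) //; apply/eqP; rewrite cards_eq0; apply/eqP.
  apply/setP => f; rewrite !inE; apply/negbTE.
  rewrite negb_and negb_and; apply/orP; right; apply/orP; right.
  apply/allPn; exists s => //; by rewrite ltnS leqNgt js.
pose V := \prod_(1 <= i < m.+1) (if i \in S then 1 else 0 : int).
have hPV : \sum_(1 <= j < n.+1) dd m j * (p_count j S)%:Z = V.
  rewrite (key (h := fun i => if i \in S then 1 else 1 - 'X^i) (G := GP)) //.
  - rewrite horner_prod; apply: eq_bigr => i _; case: ifP => _; [by rewrite hornerC | by rewrite !hornerE expr1n subrr].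
  - rewrite /GP /Pm -big_split /=; apply: teq_prod_seq => i.
    rewrite mem_index_iota => /andP [i1 _]; case: ifP => iS.
      rewrite (_ : T _ _ _ = \sum_(j < n.+1) 'X^(i * j)); last first.
        by apply: eq_bigr => j _; rewrite /condP iS -lt0n i1 orbT.
      rewrite mulrC telesc1; apply: teq_1X.
      by rewrite (leq_trans (ltnSn n)) // leq_pmull.
    rewrite T_one ?mul1r // => j; by rewrite /condP iS andbF orbF.
  - move=> i; case: ifP => _; last exact: size_1X.
    by rewrite size_poly1.
have hRV : \sum_(1 <= j < n.+1) dd m j * (r_count j S)%:Z = V.
  rewrite (key (h := fun i => if i \in S then 'X^i else 1 - 'X^i) (G := GR)) //.
  - rewrite horner_prod; apply: eq_bigr => i _; case: ifP => _; by rewrite !hornerE ?subrr ?expr1n.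
  - rewrite /GR /Pm -big_split /=; apply: teq_prod_seq => i.
    rewrite mem_index_iota => /andP [i1 _]; case: ifP => iS.
      rewrite (_ : T _ _ _ = \sum_(j < n.+1) (if nat_of_ord j == 0%N then 0 else 'X^(i * j))); last first.
        apply: eq_bigr => j _; rewrite /condR iS -lt0n i1 /=.
        by case: (nat_of_ord j == 0%N).
      rewrite mulrC telesc2; apply: teq_X1X.
      by rewrite (leq_trans (ltnSn n)) // leq_pmull.
    rewrite T_one ?mul1r // => j; by rewrite /condR iS andbF.
  - move=> i; case: ifP => _; last exact: size_1X.
    by rewrite size_polyXn.
rewrite hRV hPV; split => //; split.
  move=> hS; rewrite /V big1_seq // => i /andP [_]; rewrite mem_index_iota hS mem_iota => ->.
  by [].
move=> hS; rewrite /V.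
have [i iS ni] : exists2 i, i \in index_iota 1 m.+1 & i \notin S.
  case: (boolP (all (fun i => i \in S) (index_iota 1 m.+1))) => [hall | /allPn [i h1 h2]]; last by exists i.
  exfalso; apply: hS => x; apply/idP/idP => hx.
    by have := Sr _ hx; rewrite mem_iota add1n.
  by move/allP: hall; apply; rewrite mem_index_iota -(add1n m) -mem_iota.
rewrite (bigD1_seq i) ?iota_uniq //= (negbTE ni) mul0r //.
Qed.
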